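(* Consider the system of ordinary differential equations \[ \dot u=r_{1}u(1-u)-a_{12}uv-a_{13}uw,\qquad \dot v=r_{2}v(1-v)+a_{21}uv,\qquad \dot w=-\mu w+a_{31}uw, \] with all parameters $r_1,r_2,\mu,a_{12},a_{13},a_{21},a_{31}$ positive. If $a_{31}\le\mu$, then every solution with positive initial data $u(0),v(0),w(0)>0$ satisfies $\lim_{t\to\infty}w(t)=0$. *)

(* Defs.v *)
From Stdlib Require Import Reals.
From Coquelicot Require Import Coquelicot.
Open Scope R_scope.

Definition is_solution (r1 r2 mu a12 a13 a21 a31 : R) (u v w : R -> R) : Prop :=
  (forall t, 0 < t ->
     is_derive u t (r1 * u t * (1 - u t) - a12 * u t * v t - a13 * u t * w t) /\
     is_derive v t (r2 * v t * (1 - v t) + a21 * u t * v t) /\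
     is_derive w t (- mu * w t + a31 * u t * w t)) /\
  filterlim u (at_right 0) (locally (u 0)) /\
  filterlim v (at_right 0) (locally (v 0)) /\
  filterlim w (at_right 0) (locally (w 0)).

(* Main.v *)
Require Import Defs.
From Stdlib Require Import Reals.
From Coquelicot Require Import Coquelicot.
From Stdlib Require Import Lra Psatz.
Open Scope R_scope.

Lemma derive_cont (f : R -> R) x l : is_derive f x l -> continuity_pt f x.
Proof.
  intros H. apply continuity_pt_filterlim.
  apply (ex_derive_continuous f x). exists l; exact H.
Qed.

Lemma derive_cont' (f : R -> R) x l : is_derive f x l -> continuous f x.
Proof.
  intros H. apply (ex_derive_continuous f x). exists l; exact H.
Qed.

Lemma lin_cont (c0 c1 c2 c3 : R) (u v w : R -> R) t :
  continuous u t -> continuous v t -> continuous w t ->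
  continuous (fun s => c0 + c1 * u s + c2 * v s + c3 * w s) t.
Proof.
  intros Hu Hv Hw.
  apply (continuous_plus (fun s => c0 + c1 * u s + c2 * v s) (fun s => c3 * w s)).
  apply (continuous_plus (fun s => c0 + c1 * u s) (fun s => c2 * v s)).
  apply (continuous_plus (fun s => c0) (fun s => c1 * u s)).
  apply continuous_const.
  apply (continuous_mult (fun _ => c1) u). apply continuous_const. exact Hu.
  apply (continuous_mult (fun _ => c2) v). apply continuous_const. exact Hv.
  apply (continuous_mult (fun _ => c3) w). apply continuous_const. exact Hw.
Qed.

Lemma ball_R (t e b : R) : ball t e b -> Rabs (b - t) < e.
Proof. intros H. exact H. Qed.

Lemma pos_lemma (f h : R -> R) :
  (forall t, 0 < t -> is_derive f t (f t * h t)) ->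
  (forall t, 0 < t -> continuous h t) ->
  filterlim f (at_right 0) (locally (f 0)) -> 0 < f 0 ->
  forall t, 0 <= t -> 0 < f t.
Proof.
  intros Hd Hc Hlim H0.
  set (H := fun t => RInt h 1 t).
  assert (dH : forall t, 0 < t -> is_derive H t (h t)).
  { intros t Ht. apply is_derive_RInt with (a := 1).
    - assert (Hp : 0 < t / 2) by lra.
      exists (mkposreal _ Hp). intros b Hb. apply ball_R in Hb. simpl in Hb.
      apply Rabs_def2 in Hb.
      apply (RInt_correct h 1 b). apply ex_RInt_continuous. intros z Hz.
      apply Hc. destruct Hz as [Hz _]. unfold Rmin in Hz.
      destruct (Rle_dec 1 b); lra.
    - apply Hc; lra. }
  set (phi := fun t => f t * exp (- H t)).
  assert (dphi : forall t, 0 < t -> is_derive phi t 0).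
  { intros t Ht.
    assert (Hg : is_derive (fun x => exp (- H x)) t (scal (opp (h t)) (exp (- H t)))).
    { apply (is_derive_comp exp (fun x => - H x)).
      apply is_derive_exp. apply (is_derive_opp H). apply dH; exact Ht. }
    assert (Hm := is_derive_mult f (fun x => exp (- H x)) t _ _ (Hd t Ht) Hg
                    (fun n m => Rmult_comm n m)).
    assert (E : plus (mult (f t * h t) (exp (- H t)))
                  (mult (f t) (scal (opp (h t)) (exp (- H t)))) = 0).
    { unfold plus, mult, scal, opp; simpl. unfold mult; simpl. ring. }
    rewrite <- E. exact Hm. }
  assert (cphi : forall t, 0 < t -> phi t = phi 1).
  { intros t Ht.
    assert (HM := MVT_gen phi 1 t (fun _ => 0)). cbv zeta in HM.
    destruct HM as [c [_ Ec]].
    - intros x Hx. apply dphi. destruct Hx as [Hx _]. unfold Rmin in Hx.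
      destruct (Rle_dec 1 t); lra.
    - intros x Hx. apply (derive_cont phi x 0). apply dphi.
      destruct Hx as [Hx _]. unfold Rmin in Hx. destruct (Rle_dec 1 t); lra.
    - lra. }
  assert (fe : forall t, 0 < t -> f t = phi 1 * exp (H t)).
  { intros t Ht. rewrite <- (cphi t Ht). unfold phi.
    rewrite exp_Ropp. field. apply Rgt_not_eq, exp_pos. }
  assert (Hpos : 0 < phi 1).
  { assert (Hloc : locally (f 0) (fun y => 0 < y)).
    { exists (mkposreal _ H0). intros y Hy. apply ball_R in Hy. simpl in Hy.
      apply Rabs_def2 in Hy. lra. }
    destruct (Hlim _ Hloc) as [d Hd'].
    assert (Hdp := cond_pos d).
    assert (Hy : 0 < f (d / 2)).
    { apply Hd'. change (Rabs (d/2 - 0) < d). rewrite Rminus_0_r, Rabs_pos_eq; lra. lra. }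
    rewrite fe in Hy by lra.
    assert (He := exp_pos (H (d/2))).
    destruct (Rle_lt_dec (phi 1) 0); [|lra]. nra. }
  intros t Ht. destruct (Req_dec t 0) as [->|Hn]; [exact H0|].
  rewrite fe by lra. apply Rmult_lt_0_compat; [exact Hpos|apply exp_pos].
Qed.

Lemma local_left (f : R -> R) m d s :
  s < m -> is_derive f m d -> d < 0 -> exists x, s < x < m /\ f m < f x.
Proof.
  intros Hsm Hd Hneg. apply is_derive_Reals in Hd.
  destruct (Hd (- d / 2)) as [del Hdel]; [lra|].
  assert (Hdp := cond_pos del).
  set (hh := - Rmin (del / 2) ((m - s) / 2)).
  assert (Hmin1 : Rmin (del/2) ((m-s)/2) <= del/2) by apply Rmin_l.
  assert (Hmin2 : Rmin (del/2) ((m-s)/2) <= (m-s)/2) by apply Rmin_r.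
  assert (Hmin3 : 0 < Rmin (del/2) ((m-s)/2)) by (apply Rmin_glb_lt; lra).
  assert (Hhh : hh < 0) by (unfold hh; lra).
  specialize (Hdel hh). 
  assert (Hq : Rabs ((f (m + hh) - f m) / hh - d) < - d / 2).
  { apply Hdel. lra. rewrite Rabs_left by lra. unfold hh; lra. }
  apply Rabs_def2 in Hq.
  set (q := (f (m + hh) - f m) / hh) in Hq.
  assert (Eq : f (m + hh) - f m = q * hh) by (unfold q; field; lra).
  exists (m + hh). split. unfold hh; lra. nra.
Qed.

Lemma mono (f df : R -> R) T0 K eta :
  (forall t, T0 < t -> is_derive f t (df t)) ->
  (forall t, T0 < t -> K <= f t -> df t <= - eta) -> 0 < eta ->
  forall s t, T0 < s -> s <= t -> K <= f t -> f t <= f s.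
Proof.
  intros Hd Hc Heta s t Hs Hst HK.
  destruct (Rle_lt_dec (f t) (f s)) as [|Hlt]; [assumption|exfalso].
  destruct (continuity_ab_maj f s t Hst) as [Mx [Hmax HMx]].
  { intros c Hcc. apply (derive_cont f c (df c)). apply Hd. lra. }
  assert (Hft : f t <= f Mx) by (apply Hmax; lra).
  assert (Hne : s < Mx).
  { destruct (Req_dec Mx s) as [->|]; [lra|lra]. }
  destruct (local_left f Mx (df Mx) s Hne) as [x [Hx Hfx]].
  - apply Hd; lra.
  - assert (df Mx <= - eta) by (apply Hc; lra). lra.
  - assert (f x <= f Mx) by (apply Hmax; lra). lra.
Qed.

Lemma eventually_below (f df : R -> R) T0 K eta :
  (forall t, T0 < t -> is_derive f t (df t)) ->
  (forall t, T0 < t -> K <= f t -> df t <= - eta) -> 0 < eta ->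
  exists T, forall t, T <= t -> f t < K.
Proof.
  intros Hd Hc Heta.
  set (T1 := T0 + 1).
  set (A := Rabs (f T1 - K)).
  assert (HA : f T1 - K <= A) by apply RRle_abs.
  assert (HA0 : 0 <= A) by apply Rabs_pos.
  exists (T1 + A / eta + 1). intros t Ht.
  destruct (Rlt_le_dec (f t) K) as [|HK]; [assumption|exfalso].
  assert (HT1t : T1 < t).
  { assert (0 <= A / eta) by (apply Rdiv_le_0_compat; lra). lra. }
  assert (HM := MVT_gen f T1 t df). cbv zeta in HM.
  rewrite Rmin_left, Rmax_right in HM by lra.
  destruct HM as [c [Hc1 Ec]].
  - intros x Hx. apply Hd. unfold T1 in Hx; lra.
  - intros x Hx. apply (derive_cont f x (df x)). apply Hd. unfold T1 in Hx; lra.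
  - assert (Hfc : f t <= f c).
    { apply (mono f df T0 K eta Hd Hc Heta); try lra. unfold T1 in Hc1; lra. }
    assert (Hdc : df c <= - eta) by (apply Hc; [unfold T1 in Hc1; lra| lra]).
    assert (H1 : eta * (t - T1) >= A + eta).
    { assert (eta * (t - T1) >= eta * (A / eta + 1)) by nra.
      replace (eta * (A / eta + 1)) with (A + eta) in H by (field; lra). lra. }
    nra.
Qed.

Lemma ln_deriv (f : R -> R) t df :
  0 < f t -> is_derive f t df -> is_derive (fun s => ln (f s)) t (df / f t).
Proof.
  intros Hp Hd.
  apply (is_derive_comp ln f t (/ f t) df).
  - apply is_derive_Reals. apply derivable_pt_lim_ln. exact Hp.
  - exact Hd.
Qed.

Theorem lemma3 (r1 r2 mu a12 a13 a21 a31 : R) (u v w : R -> R) :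
  0 < r1 -> 0 < r2 -> 0 < mu -> 0 < a12 -> 0 < a13 -> 0 < a21 -> 0 < a31 ->
  a31 <= mu ->
  is_solution r1 r2 mu a12 a13 a21 a31 u v w ->
  0 < u 0 -> 0 < v 0 -> 0 < w 0 ->
  is_lim w p_infty 0.
Proof.
  intros Hr1 Hr2 Hmu Ha12 Ha13 Ha21 Ha31 Hle [Hd [Hu0 [Hv0 Hw0]]] Pu0 Pv0 Pw0.
  assert (cu : forall t, 0 < t -> continuous u t).
  { intros t Ht. destruct (Hd t Ht) as [H _]. exact (derive_cont' _ _ _ H). }
  assert (cv : forall t, 0 < t -> continuous v t).
  { intros t Ht. destruct (Hd t Ht) as [_ [H _]]. exact (derive_cont' _ _ _ H). }
  assert (cw : forall t, 0 < t -> continuous w t).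
  { intros t Ht. destruct (Hd t Ht) as [_ [_ H]]. exact (derive_cont' _ _ _ H). }
  assert (pu : forall t, 0 <= t -> 0 < u t).
  { apply (pos_lemma u (fun s => r1 + (- r1) * u s + (- a12) * v s + (- a13) * w s));
      try assumption.
    - intros t Ht. destruct (Hd t Ht) as [H _].
      replace (u t * (r1 + - r1 * u t + - a12 * v t + - a13 * w t)) with
        (r1 * u t * (1 - u t) - a12 * u t * v t - a13 * u t * w t) by ring. exact H.
    - intros t Ht. apply lin_cont; auto. }
  assert (pv : forall t, 0 <= t -> 0 < v t).
  { apply (pos_lemma v (fun s => r2 + a21 * u s + (- r2) * v s + 0 * w s));
      try assumption.
    - intros t Ht. destruct (Hd t Ht) as [_ [H _]].
      replace (v t * (r2 + a21 * u t + - r2 * v t + 0 * w t)) with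
        (r2 * v t * (1 - v t) + a21 * u t * v t) by ring. exact H.
    - intros t Ht. apply lin_cont; auto. }
  assert (pw : forall t, 0 <= t -> 0 < w t).
  { apply (pos_lemma w (fun s => - mu + a31 * u s + 0 * v s + 0 * w s));
      try assumption.
    - intros t Ht. destruct (Hd t Ht) as [_ [_ H]].
      replace (w t * (- mu + a31 * u t + 0 * v t + 0 * w t)) with
        (- mu * w t + a31 * u t * w t) by ring. exact H.
    - intros t Ht. apply lin_cont; auto. }
  destruct (eventually_below (fun s => - ln (v s)) (fun s => - (r2 * (1 - v s) + a21 * u s))
              0 (- ln (1/2)) (r2 / 2)) as [T1 HT1].
  { intros t Ht. destruct (Hd t Ht) as [_ [H _]].
    assert (Hv := pv t (Rlt_le _ _ Ht)).
    assert (H' := is_derive_opp _ _ _ (ln_deriv v t _ Hv H)).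
    replace (- (r2 * (1 - v t) + a21 * u t)) with
      (opp ((r2 * v t * (1 - v t) + a21 * u t * v t) / v t)).
    exact H'. unfold opp; simpl. field. lra. }
  { intros t Ht HK.
    assert (Hv := pv t (Rlt_le _ _ Ht)). assert (Hu := pu t (Rlt_le _ _ Ht)).
    assert (v t <= 1/2).
    { destruct (Rle_lt_dec (v t) (1/2)) as [|Hlt]; [assumption|].
      assert (ln (1/2) < ln (v t)) by (apply ln_increasing; lra). lra. }
    nra. }
  { lra. }
  set (T0 := Rmax T1 0).
  assert (HT0a : T1 <= T0) by apply Rmax_l.
  assert (HT0b : 0 <= T0) by apply Rmax_r.
  assert (vbig : forall t, T0 <= t -> 1/2 < v t).
  { intros t Ht. assert (H := HT1 t ltac:(lra)).
    apply ln_lt_inv; [lra| apply pv; lra| lra]. }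
  set (delta := Rmin (1/2) (a12 / (4 * r1))).
  assert (Hd1 : delta <= 1/2) by apply Rmin_l.
  assert (Hd2 : delta <= a12 / (4 * r1)) by apply Rmin_r.
  assert (Hd3 : 0 < delta).
  { apply Rmin_glb_lt. lra. apply Rdiv_lt_0_compat; lra. }
  assert (Hd4 : r1 * delta <= a12 / 4).
  { replace (a12 / 4) with (r1 * (a12 / (4 * r1))) by (field; lra).
    apply Rmult_le_compat_l; lra. }
  destruct (eventually_below (fun s => ln (u s))
              (fun s => r1 * (1 - u s) - a12 * v s - a13 * w s)
              T0 (ln (1 - delta)) (a12 / 4)) as [T2 HT2].
  { intros t Ht. destruct (Hd t ltac:(lra)) as [H _].
    assert (Hu := pu t ltac:(lra)).
    replace (r1 * (1 - u t) - a12 * v t - a13 * w t) with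
      ((r1 * u t * (1 - u t) - a12 * u t * v t - a13 * u t * w t) / u t)
      by (field; lra).
    exact (ln_deriv u t _ Hu H). }
  { intros t Ht HK.
    assert (Hu := pu t ltac:(lra)). assert (Hw := pw t ltac:(lra)).
    assert (Hv := vbig t ltac:(lra)).
    assert (1 - delta <= u t).
    { destruct (Rle_lt_dec (1 - delta) (u t)) as [|Hlt]; [assumption|].
      assert (ln (u t) < ln (1 - delta)) by (apply ln_increasing; lra). lra. }
    assert (r1 * (1 - u t) <= r1 * delta) by (apply Rmult_le_compat_l; lra).
    nra. }
  { lra. }
  set (T3 := Rmax T2 T0).
  assert (HT3a : T2 <= T3) by apply Rmax_l.
  assert (HT3b : T0 <= T3) by apply Rmax_r.
  assert (usmall : forall t, T3 <= t -> u t < 1 - delta).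
  { intros t Ht. assert (H := HT2 t ltac:(lra)).
    apply ln_lt_inv; [apply pu; lra| lra| lra]. }
  apply is_lim_spec. intros eps.
  assert (Heps := cond_pos eps).
  destruct (eventually_below (fun s => ln (w s)) (fun s => - mu + a31 * u s)
              T3 (ln eps) (a31 * delta)) as [T4 HT4].
  { intros t Ht. destruct (Hd t ltac:(lra)) as [_ [_ H]].
    assert (Hw := pw t ltac:(lra)).
    replace (- mu + a31 * u t) with ((- mu * w t + a31 * u t * w t) / w t)
      by (field; lra).
    exact (ln_deriv w t _ Hw H). }
  { intros t Ht _. assert (Hu := usmall t ltac:(lra)).
    assert (a31 * u t <= a31 * (1 - delta)) by (apply Rmult_le_compat_l; lra).
    nra. }
  { apply Rmult_lt_0_compat; lra. }
  exists (Rmax T4 T3). intros t Ht.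
  assert (H1 : T4 <= t) by (assert (T4 <= Rmax T4 T3) by apply Rmax_l; lra).
  assert (H2 : T3 <= t) by (assert (T3 <= Rmax T4 T3) by apply Rmax_r; lra).
  assert (Hw := pw t ltac:(lra)).
  assert (H := HT4 t H1).
  assert (w t < eps) by (apply ln_lt_inv; lra).
  rewrite Rminus_0_r, Rabs_pos_eq by lra. exact H0.
Qed.
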